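(* Let $A \in \mathbb{R}^{m \times r}$, $B \in \mathbb{R}^{r \times n}$, and $S \subseteq \mathbb{R}^n$. The following are equivalent: (i) $\ker(A_\kappa B_\lambda) \cap S = \emptyset$ for all $\kappa \in \mathbb{R}^r_+$ and $\lambda\in \mathbb{R}^n_+$; (ii) $\sigma(\ker(A)) \cap \sigma(B(\Sigma(S))) = \emptyset$.
   Context: $\mathbb{R}_+$ denotes the strictly positive reals. $A_\kappa = A\,\mathrm{diag}(\kappa)$, $B_\lambda = B\,\mathrm{diag}(\lambda)$. For $x\in\mathbb{R}^n$, $\sigma(x)\in\{-,0,+\}^n$ is the componentwise sign vector; for $T\subseteq\mathbb{R}^n$, $\sigma(T)=\{\sigma(x)\mid x\in T\}$ and $\Sigma(T)=\sigma^{-1}(\sigma(T))=\{\lambda\circ x\mid \lambda\in\mathbb{R}^n_+, x\in T\}$, where $\circ$ is the componentwise product. $B(T)=\{Bx\mid x\in T\}$. *)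

(* Defs.v *)
(* the statement is purely algebraic/order-theoretic over the
   reals, so we state it over an arbitrary real field R (e.g. the reals). *)
From HB Require Import structures.
From mathcomp Require Import all_boot all_order all_algebra.
Set Implicit Arguments. Unset Strict Implicit. Unset Printing Implicit Defensive.
Import Order.TTheory GRing.Theory Num.Theory.
Local Open Scope ring_scope.

Definition posvec (R : realFieldType) (n : nat) (v : 'cV[R]_n) : Prop :=
  forall i : 'I_n, 0 < v i 0.

(* M_v = M diag(v) *)
Definition scale_cols (R : realFieldType) (m n : nat)
  (M : 'M[R]_(m, n)) (v : 'cV[R]_n) : 'M[R]_(m, n) :=
  M *m diag_mx v^T.

Definition hadamard (R : realFieldType) (n : nat) (u v : 'cV[R]_n) : 'cV[R]_n :=
  \col_i (u i 0 * v i 0).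

Definition signvec (R : realFieldType) (n : nat) (x : 'cV[R]_n) : 'cV[R]_n :=
  map_mx Num.sg x.

Definition kerset (R : realFieldType) (m n : nat) (M : 'M[R]_(m, n))
  : 'cV[R]_n -> Prop := fun x => M *m x = 0.

Definition sigma_set (R : realFieldType) (n : nat) (T : 'cV[R]_n -> Prop)
  : 'cV[R]_n -> Prop := fun s => exists x, T x /\ signvec x = s.

Definition Sigma_set (R : realFieldType) (n : nat) (T : 'cV[R]_n -> Prop)
  : 'cV[R]_n -> Prop :=
  fun y => exists lam x, posvec lam /\ T x /\ y = hadamard lam x.

Definition image_set (R : realFieldType) (m n : nat) (B : 'M[R]_(m, n))
  (T : 'cV[R]_n -> Prop) : 'cV[R]_m -> Prop :=
  fun y => exists x, T x /\ y = B *m x.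

(* Main.v *)
Require Import Defs.
From HB Require Import structures.
From mathcomp Require Import all_boot all_order all_algebra.
Import Order.TTheory GRing.Theory Num.Theory.
Local Open Scope ring_scope.

Lemma scale_mul (R : realFieldType) (m n : nat) (M : 'M[R]_(m, n)) (v x : 'cV[R]_n) :
  scale_cols M v *m x = M *m hadamard v x.
Proof.
rewrite /scale_cols -mulmxA; congr (_ *m _).
rewrite mul_diag_mx; apply/matrixP => i j; rewrite !mxE.
by rewrite (ord1 j).
Qed.

Lemma sign_had (R : realFieldType) (n : nat) (k z : 'cV[R]_n) :
  posvec k -> signvec (hadamard k z) = signvec z.
Proof.
move=> hk; apply/matrixP => i j; rewrite !mxE (ord1 j).
by rewrite sgrM gtr0_sg ?mul1r.
Qed.

Theorem mainTheorem4 (R : realFieldType) (m r n : nat)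
  (A : 'M[R]_(m, r)) (B : 'M[R]_(r, n)) (S : 'cV[R]_n -> Prop) :
  (forall (kappa : 'cV[R]_r) (lambda : 'cV[R]_n),
     posvec kappa -> posvec lambda ->
     ~ (exists x, kerset (scale_cols A kappa *m scale_cols B lambda) x /\ S x))
  <->
  ~ (exists s, sigma_set (kerset A) s /\
               sigma_set (image_set B (Sigma_set S)) s).
Proof.
split.
- move=> H [s [[u [Au su]] [z [[y [[lam [x [hl [Sx ->]]]] ->]] sz]]]].
  have [z0 ez0] : exists z0, z0 = B *m hadamard lam x by eexists.
  rewrite -ez0 in sz.
  pose k : 'cV[R]_r := \col_i (if z0 i 0 == 0 then 1 else u i 0 / z0 i 0).
  have hsg : forall i, Num.sg (u i 0) = Num.sg (z0 i 0).
    move=> i; have := congr1 (fun M : 'cV[R]_r => M i 0) su.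
    have := congr1 (fun M : 'cV[R]_r => M i 0) sz.
    by rewrite /signvec !mxE => -> ->.
  have hk : posvec k.
    move=> i; rewrite /k mxE; case: eqP => [//|/eqP nz].
    have := hsg i; case: (ltrgtP (z0 i 0) 0) => hz.
    + rewrite (ltr0_sg hz) => /eqP; rewrite sgr_cp0 => hu.
      by rewrite -mulrNN -invrN divr_gt0 // oppr_gt0.
    + rewrite (gtr0_sg hz) => /eqP; rewrite sgr_cp0 => hu.
      by rewrite divr_gt0.
    + by rewrite hz eqxx in nz.
  have hku : hadamard k z0 = u.
    apply/matrixP => i j; rewrite /k !mxE (ord1 j).
    case: eqP => [e|/eqP nz].
    + by have := hsg i; rewrite e sgr0 => /eqP; rewrite sgr_eq0 => /eqP ->; rewrite mulr0.
    + by rewrite mulrAC -mulrA divff // mulr1.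
  apply: (H k lam hk hl); exists x; split => //.
  by rewrite /kerset -mulmxA !scale_mul -ez0 hku.
- move=> H k lam hk hl [x [Kx Sx]]; apply: H.
  exists (signvec (B *m hadamard lam x)); split.
  + exists (hadamard k (B *m hadamard lam x)); split; last exact: sign_had.
    by move: Kx; rewrite /kerset -mulmxA !scale_mul.
  + exists (B *m hadamard lam x); split => //.
    exists (hadamard lam x); split => //; exists lam, x; done.
Qed.
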